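(* Let $\Gamma$ be a graph on $k$ vertices with arc set $X$, and let $G$ be a finite group with identity $e$. Let $\alpha:X\to G$ be an ordinary voltage assignment, i.e. $\alpha(a^-)=\alpha(a)^{-1}$ for all arcs $a$. Let $\Gamma^{\alpha}$ be its lift, with vertex set $V\times G$ and with an arc $(a,g)$ from $(u,g)$ to $(v,g\alpha(a))$ for each arc $a$ from $u$ to $v$ and each $g\in G$. Fix $c_1,c_2,c_3,c_4\in\mathbb{R}$ with $c_1\neq0$, and let $U^{\alpha}=c_1A+c_2D+c_3I+c_4J$ be the universal adjacency matrix of $\Gamma^{\alpha}$. Let $B(U)=c_1B(A)+c_2B(D)+c_3B(I)+c_4B(J)$. Then $$\mathrm{Sp}(U^{\alpha})=\bigcup_{\rho\in\mathrm{Irep}(G)} d_\rho\cdot \mathrm{Sp}(\rho(B(U))),$$ where the union is a union of multisets.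
   Context: Graphs may have loops and multiple edges; every undirected edge is a pair of mutually reverse arcs $a,a^-$, and a loop contributes $2$ to the degree. $A$, $D$, $I$, $J$ denote the adjacency matrix, the diagonal degree matrix, the identity matrix and the all-ones matrix of $\Gamma^{\alpha}$. The base matrix $B(U)$ is the $k\times k$ matrix over the group algebra $\mathbb{C}(G)$ whose components are: - $B(A)_{uv}=\sum\alpha(a)$ over all arcs $a$ from $u$ to $v$ (and $0$ if there are none); - $B(D)=\mathrm{diag}(\deg(u)e)$; - $B(I)=\mathrm{diag}(e)$; - $B(J)_{uv}=\sum_{g\in G}g$ for all $u,v$. $\mathrm{Irep}(G)$ is a complete set of inequivalent unitary irreducible representations of $G$, and $d_\rho=\dim\rho$. The $\rho$-image $\rho(M)$ of a matrix $M$ over $\mathbb{C}(G)$ replaces each entry $\sum_g x_g g$ by the block $\sum_g x_g\rho(g)$; zero entries become zero blocks. $\mathrm{Sp}$ denotes the multiset of eigenvalues, and $m\cdot\mathrm{Sp}(M)$ repeats each eigenvalue $m$ times. *)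

(* Defs.v *)
From HB Require Import structures.
From mathcomp Require Import all_boot all_order all_algebra all_fingroup all_solvable all_field all_character.
Set Implicit Arguments. Unset Strict Implicit. Unset Printing Implicit Defensive.
Import Order.TTheory GRing.Theory Num.Theory.
Local Open Scope ring_scope.

Section Defs.
Variable C : numClosedFieldType.

(* A square matrix indexed by the elements of a finite type T
   (rows/columns ordered by enum T; spectra do not depend on the ordering). *)
Definition fmx (T : finType) (f : T -> T -> C) : 'M[C]_#|T| :=
  \matrix_(i < #|T|, j < #|T|) f (enum_val i) (enum_val j).

(* Multiplicity of x in the multiset Sp(M) of eigenvalues of M
   (algebraic multiplicity = multiplicity as a root of char_poly). *)
Definition Sp_mult n (M : 'M[C]_n) (x : C) : nat := mup x (char_poly M).

(* A (multi)graph given by its arcs: src/tgt maps X -> V. *)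
Section Graph.
Variables (V X : finType) (src tgt : X -> V).

Definition gdeg (u : V) : nat := #|[set a | src a == u]|.
Definition adjM : 'M[C]_#|V| :=
  fmx (fun u v => (#|[set a | (src a == u) && (tgt a == v)]|)%:R).
Definition degM : 'M[C]_#|V| := fmx (fun u v => (u == v)%:R * (gdeg u)%:R).
Definition idM : 'M[C]_#|V| := fmx (fun u v => (u == v)%:R).
Definition allonesM : 'M[C]_#|V| := fmx (fun u v => 1).

Definition univM (c1 c2 c3 c4 : C) : 'M[C]_#|V| :=
  c1 *: adjM + c2 *: degM + c3 *: idM + c4 *: allonesM.
End Graph.

Section Lift.
Variables (gT : finGroupType) (V X : finType) (src tgt : X -> V) (alpha : X -> gT).
Definition lift_src (b : X * gT) : V * gT := (src b.1, b.2).
Definition lift_tgt (b : X * gT) : V * gT := (tgt b.1, (b.2 * alpha b.1)%g).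

(* Group algebra C(G): an element sum_g x_g g is its coefficient function. *)

Definition gel (g : gT) : {ffun gT -> C^o} := [ffun h => ((h == g)%:R : C^o)].

Definition BA (u v : V) : {ffun gT -> C^o} := \sum_(a | (src a == u) && (tgt a == v)) gel (alpha a).
Definition BD (u v : V) : {ffun gT -> C^o} := if u == v then (gdeg src u)%:R *: gel 1%g else 0.
Definition BI (u v : V) : {ffun gT -> C^o} := if u == v then gel 1%g else 0.
Definition BJ (u v : V) : {ffun gT -> C^o} := \sum_(g : gT) gel g.
Definition BU (c1 c2 c3 c4 : C) (u v : V) : {ffun gT -> C^o} :=
  c1 *: BA u v + c2 *: BD u v + c3 *: BI u v + c4 *: BJ u v.
End Lift.

(* rho-image of a matrix over C(G): entry sum_g x_g g replaced by block sum_g x_g rho(g) *)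
Definition rho_image (gT : finGroupType) (V : finType) d
    (rho : mx_representation C [set: gT]%G d) (M : V -> V -> {ffun gT -> C^o})
    :=
  fmx (fun (p q : (V * 'I_d)%type) => (\sum_(g : gT) M p.1 q.1 g *: rho g) p.2 q.2).

End Defs.

(* Main.v *)
Require Import Defs.
From HB Require Import structures.
From mathcomp Require Import all_boot all_order all_algebra all_fingroup all_solvable all_field all_character.
Import Order.TTheory GRing.Theory Num.Theory.
Local Open Scope ring_scope.
Set Implicit Arguments. Unset Strict Implicit. Unset Printing Implicit Defensive.


Section Gen.
Variable C : numClosedFieldType.

Definition fmx2 (S T : finType) (f : S -> T -> C) : 'M[C]_(#|S|, #|T|) :=
  \matrix_(i < #|S|, j < #|T|) f (enum_val i) (enum_val j).

Lemma fmx_fmx2 (T : finType) (f : T -> T -> C) : fmx f = fmx2 f.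
Proof. by []. Qed.

Lemma sum_enum_val (S : finType) (F : S -> C) :
  \sum_(i < #|S|) F (enum_val i) = \sum_(x : S) F x.
Proof. by rewrite (big_enum_val (A:=S)). Qed.

Lemma mul_fmx2 (S T U : finType) (f : S -> T -> C) (g : T -> U -> C) :
  fmx2 f *m fmx2 g = fmx2 (fun x z => \sum_(y : T) f x y * g y z).
Proof.
apply/matrixP=> i j; rewrite !mxE.
rewrite -(sum_enum_val (fun y => f (enum_val i) y * g y (enum_val j))).
by apply: eq_bigr => k _; rewrite !mxE.
Qed.

Lemma char_poly_sim n (L D Q : 'M[C]_n) :
  Q \in unitmx -> L *m Q = Q *m D -> char_poly L = char_poly D.
Proof.
move=> uQ LQ; pose Qp := map_mx (@polyC C) Q.
have H : char_poly_mx L *m Qp = Qp *m char_poly_mx D.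
  rewrite /char_poly_mx mulmxBl mulmxBr -!map_mxM LQ.
  by rewrite mul_scalar_mx mul_mx_scalar.
have dQ : \det Qp != 0.
  by rewrite det_map_mx polyC_eq0 -unitfE -unitmxE.
move/(congr1 determinant): H; rewrite !det_mulmx /char_poly => H.
by apply: (mulIf dQ); rewrite H mulrC.
Qed.

Section Blocks.
Variables (T : eqType) (m : T -> nat) (n : nat).

Fixpoint bsz (s : seq T) : nat := if s is t :: s' then (m t + bsz s')%N else 0%N.

Fixpoint rowcat (P : forall t, 'M[C]_(n, m t)) (s : seq T) : 'M[C]_(n, bsz s) :=
  match s return 'M[C]_(n, bsz s) with
  | [::] => 0
  | t :: s' => row_mx (P t) (rowcat P s')
  end.

Fixpoint bdiag (D : forall t, 'M[C]_(m t)) (s : seq T) : 'M[C]_(bsz s) :=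
  match s return 'M[C]_(bsz s) with
  | [::] => 0
  | t :: s' => block_mx (D t) 0 0 (bdiag D s')
  end.

Lemma bszE s : bsz s = (\sum_(t <- s) m t)%N.
Proof. by elim: s => [|t s IH]; rewrite ?big_nil ?big_cons //= IH. Qed.

Lemma char_poly_block n1 n2 (A : 'M[C]_n1) (B : 'M[C]_n2) :
  char_poly (block_mx A 0 0 B) = char_poly A * char_poly B.
Proof.
rewrite /char_poly /char_poly_mx map_block_mx (scalar_mx_block n1 n2).
rewrite opp_block_mx add_block_mx !map_mx0 oppr0 !addr0 subr0.
by rewrite det_ublock.
Qed.

Lemma char_poly_bdiag D s : char_poly (bdiag D s) = \prod_(t <- s) char_poly (D t).
Proof.
elim: s => [|t s IH] /=.
  by rewrite big_nil /char_poly det_mx00.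
by rewrite char_poly_block IH big_cons.
Qed.

Lemma mul_rowcat_l (L : 'M[C]_n) P s :
  L *m rowcat P s = rowcat (fun t => L *m P t) s.
Proof. by elim: s => [|t s IH] /=; rewrite ?mulmx0 // mul_mx_row IH. Qed.

Lemma mul_rowcat_bdiag P D s :
  rowcat P s *m bdiag D s = rowcat (fun t => P t *m D t) s.
Proof.
elim: s => [|t s IH] /=; first by rewrite mulmx0.
by rewrite mul_row_block !mulmx0 addr0 add0r IH.
Qed.

Lemma eq_rowcat P P' s : (forall t, P t = P' t) -> rowcat P s = rowcat P' s.
Proof. by move=> E; elim: s => [|t s IH] //=; rewrite E IH. Qed.

Lemma rowcat_eq0 (v : 'rV[C]_n) P s :
  v *m rowcat P s = 0 -> forall t, t \in s -> v *m P t = 0.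
Proof.
elim: s => [|t s IH] //=; rewrite mul_mx_row => /eqP.
rewrite row_mx_eq0 => /andP[/eqP H1 /eqP H2] u.
by rewrite inE => /orP[/eqP -> // | us]; apply: IH.
Qed.

Lemma char_poly_decomp (L : 'M[C]_n) P D s :
  bsz s = n -> (forall t, L *m P t = P t *m D t) -> row_free (rowcat P s) ->
  char_poly L = \prod_(t <- s) char_poly (D t).
Proof.
move=> E HLP rf.
have HQ : L *m rowcat P s = rowcat P s *m bdiag D s.
  by rewrite mul_rowcat_l mul_rowcat_bdiag; apply: eq_rowcat.
rewrite -char_poly_bdiag.
move: (rowcat P s) (bdiag D s) HQ rf; rewrite E => Q Dg HQ rf.
by apply: (char_poly_sim _ HQ); rewrite -row_free_unit.
Qed.

End Blocks.
End Gen.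


Section Rep.
Variables (C : numClosedFieldType) (gT : finGroupType) (Irep : finType) (d : Irep -> nat).
Variable rho : forall i : Irep, mx_representation C [set: gT]%G (d i).
Hypothesis rho_irr : forall i, mx_irreducible (rho i).
Hypothesis rho_ineq : forall i j, mx_rsim (rho i) (rho j) -> i = j.
Hypothesis rho_complete : forall n (r : mx_representation C [set: gT]%G n),
      mx_irreducible r -> exists i, mx_rsim r (rho i).

Let G := [set: gT]%G.
Let sG := DecSocleType (regular_repr C G).
Let C'G : ([pchar C]^'.-group G)%g.
Proof. by apply/pgroupP=> p _; rewrite inE /= pchar_num. Qed.

Lemma fourier_inj (y : gT -> C) :
  (forall i, \sum_h y h *: rho i h = 0) -> forall h, y h = 0.
Proof.
move=> Hy.
pose aG := regular_repr C G.
pose A := \sum_(h in G) y h *: aG h.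
have opA j : gring_op (irr_repr j) A = \sum_(h in G) y h *: irr_repr (sG := sG) j h.
  rewrite linear_sum; apply: eq_bigr => h _; rewrite linearZ /= gring_opG ?inE //.
have opA0 j : gring_op (irr_repr (sG := sG) j) A = 0.
  have [i [B _ rfB hom]] := rho_complete (socle_irr j).
  rewrite opA; apply: (row_free_inj rfB); rewrite mul0mx mulmx_suml.
  transitivity (B *m \sum_h y h *: rho i h); last by rewrite Hy mulmx0.
  rewrite mulmx_sumr; apply: eq_big => [h|h _]; first by rewrite inE.
  by rewrite -scalemxAl hom ?inE // scalemxAr.
have RA : (A \in group_ring C G)%MS by apply/envelop_mxP; exists y.
have A0 : A = 0.
  rewrite -[A]mul1mx -(Wedderburn_sum_id_pchar sG C'G) mulmx_suml big1 // => j _.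
  have Rj : (Wedderburn_id j *m A \in Wedderburn_subring j)%MS.
    have /andP[_ idr] := Wedderburn_ideal j.
    apply: (submx_trans _ idr); apply: mem_mulsmx => //.
    exact: Wedderburn_id_mem.
  have inj := regular_op_inj_pchar (sG := sG) C'G (socle_irr j).
  apply: inj; rewrite ?inE ?irr_reprK_pchar //.
  - exact: mem0mx.
  - by rewrite linear0 gring_opM // opA0 mulmx0.
move=> h.
have := congr1 (gring_proj h) A0.
rewrite linear0 /A linear_sum (bigD1 h) ?inE //= big1 => [|g /andP[_ ngh]].
  rewrite addr0 linearZ /= gring_projE ?inE // eqxx => /matrixP /(_ 0 0).
  by rewrite !mxE /= mulr1.
by rewrite linearZ /= gring_projE ?inE // eq_sym (negPf ngh) scaler0.
Qed.

Lemma sum_d2 : (\sum_i d i ^ 2)%N = #|gT|.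
Proof.
pose f i : sG := irr_comp sG (rho i).
have rs i : mx_rsim (rho i) (irr_repr (f i)) := rsim_irr_comp_pchar sG C'G (rho_irr i).
have df i : d i = irr_degree (f i) by case: (rs i).
have finj : injective f.
  move=> i i' E; apply: rho_ineq; apply: mx_rsim_trans (rs i) _.
  rewrite E; exact: mx_rsim_sym (rs i').
have fsurj j : exists i, f i = j.
  have [i si] := rho_complete (socle_irr j); exists i.
  by rewrite /f -(irr_comp_rsim_pchar sG C'G si) irr_reprK_pchar.
have fbij : bijective f.
  apply: (@inj_card_bij _ _ f finj).
  have E : f @: [set: Irep] = [set: sG].
    apply/setP => j; rewrite !inE.
    by apply/imsetP; have [i <-] := fsurj j; exists i; rewrite ?inE.
  by rewrite -cardsT -E (leq_trans (leq_imset_card _ _)) // cardsT.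
have splitG : group_splitting_field C G := @group_closure_closed_field C gT G.
rewrite -cardsT -(sum_irr_degree_pchar sG C'G splitG).
rewrite (reindex f) /=; last exact: onW_bij.
by apply: eq_bigr => i _; rewrite df.
Qed.

End Rep.


Lemma card_sumC (C : numClosedFieldType) (T : finType) (Q : pred T) :
  (#|[set a | Q a]|)%:R = \sum_a (Q a)%:R :> C.
Proof.
rewrite -sum1dep_card natr_sum big_mkcond /=.
by apply: eq_bigr => a _; case: (Q a).
Qed.

Section Lift.
Variables (C : numClosedFieldType) (gT : finGroupType) (V X : finType) (src tgt : X -> V) (alpha : X -> gT).
Variables (c1 c2 c3 c4 : C).

Lemma lift_adj_set u h v k :
  [set b | lift_src src b == (u, h) & lift_tgt tgt alpha b == (v, k)] =
  (fun a => (a, h)) @: [set a | (src a == u) && (tgt a == v) && (alpha a == h^-1 * k)%g].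
Proof.
apply/setP => [[a g]]; rewrite !inE /lift_src /lift_tgt /= !xpair_eqE.
apply/idP/imsetP.
  case/andP => /andP[/eqP sa /eqP gh] /andP[/eqP ta /eqP ga].
  by exists a; rewrite ?inE ?sa ?ta ?eqxx /= -?ga ?gh ?mulKg.
case=> a'; rewrite inE => /andP[/andP[sa ta] al] [-> ->].
by rewrite sa ta eqxx /= (eqP al) mulKVg eqxx.
Qed.

Lemma lift_deg_set u (h : gT) :
  [set b | lift_src src b == (u, h)] = (fun a => (a, h)) @: [set a | src a == u].
Proof.
apply/setP => [[a g]]; rewrite !inE /lift_src /= !xpair_eqE.
apply/idP/imsetP.
  by case/andP => sa /eqP gh; exists a; rewrite ?inE ?sa ?gh.
by case=> a'; rewrite inE => sa [-> ->]; rewrite sa eqxx.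
Qed.

Lemma pair_inj (h : gT) : injective (fun a : X => (a, h)).
Proof. by move=> a b [->]. Qed.

Lemma L_eq : univM (lift_src src) (lift_tgt tgt alpha) c1 c2 c3 c4 =
  fmx2 (fun x y : V * gT => BU src tgt alpha c1 c2 c3 c4 x.1 y.1 (x.2^-1 * y.2)%g).
Proof.
apply/matrixP => i j; rewrite !mxE.
move: (enum_val i) (enum_val j) => [u h] [v k] /=.
rewrite /BU /= !ffunE.
set z := (h^-1 * k)%g.
congr (_ + _ + _ + _).
- congr (_ * _); rewrite lift_adj_set card_imset; last exact: pair_inj.
  rewrite card_sumC /BA sum_ffunE [RHS]big_mkcond /=.
  apply: eq_bigr => a _; rewrite ffunE -/z.
  by case: ((src a == u) && (tgt a == v)) => //=; rewrite eq_sym.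
- congr (_ * _); rewrite /gdeg lift_deg_set card_imset; last exact: pair_inj.
  rewrite /BD xpair_eqE (eq_mulVg1 h k) -/z.
  case: (u == v) => /=; last by rewrite mul0r ffunE.
  by rewrite !ffunE /= mulrC.
- congr (_ * _); rewrite /BI xpair_eqE (eq_mulVg1 h k) -/z.
  by case: (u == v) => /=; rewrite ffunE.
- congr (_ * _); rewrite /BJ sum_ffunE (bigD1 z) //= ffunE eqxx big1 ?addr0 //.
  by move=> g ngz; rewrite ffunE eq_sym (negPf ngz).
Qed.

End Lift.


Lemma eq_fmx2 (C : numClosedFieldType) (S T : finType) (f g : S -> T -> C) :
  (forall x y, f x y = g x y) -> fmx2 f = fmx2 g.
Proof. by move=> E; apply/matrixP => a b; rewrite !mxE E. Qed.

Lemma mul_row_fmx2 (C : numClosedFieldType) (S T : finType) (v : 'rV[C]_#|S|)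
   (f : S -> T -> C) j :
  (v *m fmx2 f) 0 j = \sum_(x : S) v 0 (enum_rank x) * f x (enum_val j).
Proof.
rewrite mxE -(sum_enum_val (fun x => v 0 (enum_rank x) * f x (enum_val j))).
by apply: eq_bigr => a _; rewrite enum_valK mxE.
Qed.

Lemma mup_prod (F : fieldType) (x : F) (I : Type) (s : seq I) (p : I -> {poly F}) :
  (forall i, p i != 0) -> mup x (\prod_(i <- s) p i) = (\sum_(i <- s) mup x (p i))%N.
Proof.
move=> nz; elim: s => [|i s IH].
  by rewrite !big_nil mupNroot // rootC oner_eq0.
rewrite !big_cons mupM ?IH //.
by rewrite prodf_seq_neq0; elim: (s) => //= j s0 ->; rewrite nz.
Qed.

Lemma sum_pair (C : numClosedFieldType) (A B : finType) (F : A * B -> C) :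
  \sum_p F p = \sum_a \sum_b F (a, b).
Proof. by rewrite pair_big; apply: eq_bigr => [[a b]]. Qed.

Section Inter.
Variables (C : numClosedFieldType) (gT : finGroupType) (V : finType) (Irep : finType) (d : Irep -> nat).
Variable rho : forall i : Irep, mx_representation C [set: gT]%G (d i).
Variable B : V -> V -> {ffun gT -> C^o}.

Definition LB := fmx2 (fun x y : V * gT => B x.1 y.1 (x.2^-1 * y.2)%g).

Definition Pm i (r : 'I_(d i)) :=
  fmx2 (fun (x : V * gT) (y : V * 'I_(d i)) => (x.1 == y.1)%:R * rho i x.2 r y.2).

Lemma inter i r : LB *m Pm r = Pm r *m rho_image (rho i) B.
Proof.
rewrite /rho_image fmx_fmx2 !mul_fmx2; apply: eq_fmx2 => [[u h] [w q]] /=.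
rewrite !sum_pair /=.
rewrite (bigD1 w) //= [RHS](bigD1 u) //=.
rewrite [X in _ + X = _]big1 => [|v nvw]; last first.
  by apply: big1 => k _; rewrite (negPf nvw) mul0r mulr0.
rewrite [X in _ = _ + X]big1 => [|v nuv]; last first.
  by apply: big1 => p _; rewrite eq_sym (negPf nuv) !mul0r.
rewrite !eqxx !addr0.
rewrite (reindex_inj (mulgI h)) /=.
under eq_bigr => g _ do rewrite mulKg repr_mxM ?inE // mxE mul1r mulr_sumr.
under [RHS]eq_bigr => p _ do rewrite mul1r summxE mulr_sumr.
rewrite exchange_big /=; apply: eq_bigr => g _; apply: eq_bigr => p _.
by rewrite mxE mulrCA.
Qed.

End Inter.


Section Final.
Variables (C : numClosedFieldType) (gT : finGroupType) (V : finType) (Irep : finType) (d : Irep -> nat).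
Variable rho : forall i : Irep, mx_representation C [set: gT]%G (d i).
Hypothesis rho_irr : forall i, mx_irreducible (rho i).
Hypothesis rho_ineq : forall i j, mx_rsim (rho i) (rho j) -> i = j.
Hypothesis rho_complete : forall n (r : mx_representation C [set: gT]%G n),
      mx_irreducible r -> exists i, mx_rsim r (rho i).

Definition Tix : finType := {i : Irep & 'I_(d i)}.
Definition msz (t : Tix) := #|{: V * 'I_(d (tag t))}|.
Definition Pt (t : Tix) : 'M[C]_(#|{: V * gT}|, msz t) := Pm V rho (tagged t).

Lemma rowfree_P : row_free (rowcat Pt (enum Tix)).
Proof.
apply: inj_row_free => v Hv.
have H t : v *m Pt t = 0 by apply: (rowcat_eq0 Hv); rewrite mem_enum.
apply/rowP => a; rewrite mxE -(enum_valK a); case: (enum_val a) => w h.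
pose y h' := v 0 (enum_rank (w, h')).
rewrite -/(y h); move: h; apply: (fourier_inj rho_complete) => i.
apply/matrixP => r p; rewrite summxE !mxE.
have := H (Tagged (fun i => 'I_(d i)) r).
move/matrixP/(_ 0 (enum_rank (w, p))); rewrite mul_row_fmx2 !mxE enum_rankK.
rewrite sum_pair (bigD1 w) //= [X in _ + X]big1 => [|u nuw]; last first.
  by apply: big1 => g _; rewrite (negPf nuw) mul0r mulr0.
rewrite eqxx addr0 => E; rewrite -[RHS]E; apply: eq_bigr => g _.
by rewrite mxE mul1r.
Qed.

Lemma sig_sum (F : Irep -> nat) : (\sum_(t : Tix) F (tag t) = \sum_i d i * F i)%N.
Proof.
transitivity (\sum_i \sum_(r : 'I_(d i)) F i)%N.
  by rewrite sig_big_dep.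
by apply: eq_bigr => i _; rewrite big_const_ord iter_addn_0 mulnC.
Qed.

Lemma bsz_ok : bsz msz (enum Tix) = #|{: V * gT}|.
Proof.
rewrite bszE big_enum /= (sig_sum (fun i => #|{: V * 'I_(d i)}|)).
under eq_bigr => i _ do rewrite card_prod card_ord mulnCA mulnn.
rewrite -big_distrr /= (sum_d2 rho_irr rho_ineq rho_complete).
by rewrite card_prod.
Qed.

Lemma final_eq (X : finType) (src tgt : X -> V) (alpha : X -> gT) c1 c2 c3 c4 x :
 Sp_mult (univM (lift_src src) (lift_tgt tgt alpha) c1 c2 c3 c4) x =
 (\sum_i d i * Sp_mult (rho_image (rho i) (BU src tgt alpha c1 c2 c3 c4)) x)%N.
Proof.
rewrite /Sp_mult L_eq.
set B := BU src tgt alpha c1 c2 c3 c4.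
rewrite (@char_poly_decomp C _ msz #|{: V * gT}| (LB B) Pt
          (fun t => rho_image (rho (tag t)) B) (enum Tix) bsz_ok).
- rewrite mup_prod; last by move=> t; rewrite monic_neq0 // char_poly_monic.
  by rewrite big_enum /= (sig_sum (fun i => mup x (char_poly (rho_image (rho i) B)))).
- by move=> t; exact: inter.
- exact: rowfree_P.
Qed.

End Final.

Theorem mainTheorem2
  (C : numClosedFieldType) (gT : finGroupType)
  (V X : finType) (src tgt : X -> V) (rev : X -> X)
  (rev_inv : forall a, rev (rev a) = a)
  (rev_nofix : forall a, rev a != a)
  (rev_src : forall a, src (rev a) = tgt a)
  (rev_tgt : forall a, tgt (rev a) = src a)
  (alpha : X -> gT)
  (alpha_rev : forall a, alpha (rev a) = ((alpha a)^-1)%g)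
  (c1 c2 c3 c4 : C)
  (c1_real : c1 \is Num.real) (c2_real : c2 \is Num.real)
  (c3_real : c3 \is Num.real) (c4_real : c4 \is Num.real)
  (c1_neq0 : c1 != 0)
  (Irep : finType) (d : Irep -> nat)
  (rho : forall i : Irep, mx_representation C [set: gT]%G (d i))
  (rho_irr : forall i, mx_irreducible (rho i))
  (rho_unitary : forall i (g : gT),
      rho i g *m (map_mx Num.conj (rho i g))^T = 1%:M)
  (rho_ineq : forall i j, mx_rsim (rho i) (rho j) -> i = j)
  (rho_complete : forall n (r : mx_representation C [set: gT]%G n),
      mx_irreducible r -> exists i, mx_rsim r (rho i)) :
  forall x : C,
    Sp_mult (univM (lift_src src) (lift_tgt tgt alpha) c1 c2 c3 c4) x =
    (\sum_(i : Irep) d i * Sp_mult (rho_image (rho i) (BU src tgt alpha c1 c2 c3 c4)) x)%N.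
Proof.
move=> x; exact: final_eq.
Qed.
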